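(* There exist constants $K,k,D>0$ such that for all positive integers $n\ge m$ there exists an indexed family $\mathcal F=(f_1,\dots,f_T)$ of functions $f_i\colon\mathbb B^n\to\mathbb B^m$ with $T\le K\,2^m n^k$ having the following property: for every $b\in\mathbb B^m$ and every set of indices $I\subseteq\{1,\dots,T\}$ with $\#I\ge T/2$, $$\#\{a\in\mathbb B^n : f_i(a)\ne b \text{ for all } i\in I\}\le D\cdot 2^m.$$
   Context: $\mathbb B^k$ denotes the set of binary strings of length $k$. *)

(* Defs.v *)
From mathcomp Require Import all_boot.
From Stdlib Require Import Reals.
Set Implicit Arguments. Unset Strict Implicit. Unset Printing Implicit Defensive.

Notation Bstr n := (n.-tuple bool).

Definition missed (n m T : nat) (F : 'I_T -> Bstr n -> Bstr m)
  (I : {set 'I_T}) (b : Bstr m) : nat :=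
  #|[set a : Bstr n | [forall i in I, F i a != b]]|.

(* Main.v *)
Require Import Defs.
From mathcomp Require Import all_boot.
From Stdlib Require Import Reals.
From Stdlib Require Import Lra.
From mathcomp Require Import zify.
Import ssrnat.
Set Implicit Arguments. Unset Strict Implicit. Unset Printing Implicit Defensive.

Lemma card_bigcup_le (I T : finType) (P : pred I) (S : I -> {set T}) :
  #|\bigcup_(i | P i) S i| <= \sum_(i | P i) #|S i|.
Proof.
apply: (big_ind2 (fun (A : {set T}) n => #|A| <= n)); first by rewrite cards0.
  move=> A1 n1 A2 n2 h1 h2; apply: leq_trans (leq_card_setU A1 A2) _.
  exact: leq_add.
by [].
Qed.

Lemma card_family_prod (aT rT : finType) (F : aT -> pred rT) :
  #|(finfun.family F : simpl_pred {ffun aT -> rT})| = \prod_(x : aT) #|F x|.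
Proof. by rewrite card_family foldrE big_map big_enum. Qed.

Lemma leq_expn e a b : a <= b -> a ^ e <= b ^ e.
Proof. by case: e => [|e] // h; rewrite leq_exp2r. Qed.

Lemma ffact_le_exp k x : x ^_ k <= x ^ k.
Proof.
elim: k x => [|k IH] x; first by [].
rewrite ffactnS expnS leq_mul2l; case: x => [|x] //=.
apply: leq_trans (IH x) _; apply: leq_expn; lia.
Qed.

Lemma bin_le_exp x k : 'C(x, k) <= x ^ k.
Proof.
apply: leq_trans (ffact_le_exp k x); rewrite -bin_ffact.
by rewrite leq_pmulr // fact_gt0.
Qed.

Lemma bernoulli_aux x k : x ^ k.+1 + k.+1 * x ^ k <= x.+1 ^ k.+1.
Proof.
elim: k => [|k IH]; first by rewrite !expn1 expn0; lia.
rewrite (expnS x.+1); set a := x ^ k in IH *.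
have -> : x ^ k.+2 = x * (x * a) by rewrite !expnS.
have -> : x ^ k.+1 = x * a by rewrite expnS.
move: IH; rewrite (expnS x) -/a; set c := x.+1 ^ k.+1 => IH; nia.
Qed.

Lemma key_ineq x : 0 < x -> 2 * (x.-1) ^ x <= x ^ x.
Proof.
case: x => [|y] // _ /=.
have h1 : 2 * y.+1 ^ y.+1 <= y.+2 ^ y.+1.
  have := bernoulli_aux y.+1 y; rewrite -expnS; lia.
have h2 : (y * y.+2) ^ y.+1 <= (y.+1 * y.+1) ^ y.+1 by apply: leq_expn; nia.
rewrite !expnMn in h2.
have hp : 0 < y.+1 ^ y.+1 by rewrite expn_gt0.
rewrite -(leq_pmul2r hp).
move: h1 h2 hp; set A := y ^ y.+1; set B := y.+1 ^ y.+1; set C := y.+2 ^ y.+1.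
move=> h1 h2 hp; apply: leq_trans h2.
have := leq_mul h1 (leqnn A); nia.
Qed.

Lemma card_sets (T : finType) : #|{set T}| = 2 ^ #|T|.
Proof.
rewrite -cardsT -card_powerset; apply: eq_card => S.
by rewrite powersetE subsetT.
Qed.

Lemma exp_mono (p u s S T : nat) : p <= u -> s <= S -> S <= T ->
  p ^ S * u ^ (T - S) <= p ^ s * u ^ (T - s).
Proof.
move=> hpu hsS hST.
have -> : S = s + (S - s) by lia.
have -> : T - s = (S - s) + (T - (s + (S - s))) by lia.
rewrite !expnD -mulnA leq_mul2l; apply/orP; right.
by rewrite leq_mul2r; apply/orP; right; apply: leq_expn.
Qed.

Lemma card_bad (T s : nat) (U : finType) (P : pred U) : s <= T ->
  #|[set F : {ffun 'I_T -> U} | s <= #|[set i | P (F i)]|]|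
    <= 2 ^ T * (#|P| ^ s * #|U| ^ (T - s)).
Proof.
move=> hsT; set c := #|P| ^ s * #|U| ^ (T - s).
have sub: [set F : {ffun 'I_T -> U} | s <= #|[set i | P (F i)]|] \subset
   \bigcup_(S : {set 'I_T} | s <= #|S|) [set F : {ffun 'I_T -> U} | [forall i in S, P (F i)]].
  apply/subsetP => F; rewrite inE => hF; apply/bigcupP; exists [set i | P (F i)] => //.
  by rewrite inE; apply/forallP => i; apply/implyP; rewrite inE.
apply: leq_trans (subset_leq_card sub) _; apply: leq_trans (card_bigcup_le _ _) _.
have each (S : {set 'I_T}) : s <= #|S| -> #|[set F : {ffun 'I_T -> U} | [forall i in S, P (F i)]]| <= c.
  move=> hS.
  have -> : #|[set F : {ffun 'I_T -> U} | [forall i in S, P (F i)]]| =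
      #|(finfun.family (fun i => if i \in S then P else predT) : simpl_pred {ffun 'I_T -> U})|.
    apply: eq_card => F; rewrite inE; apply/forallP/familyP => h i; have := h i;
      case: (i \in S) => //=.
  rewrite card_family_prod (bigID (mem S)) /=.
  rewrite (eq_bigr (fun=> #|P|)); last by move=> i ->.
  rewrite [X in _ * X](eq_bigr (fun=> #|U|)); last by move=> i /negbTE ->.
  rewrite !prod_nat_const.
  have hC : #|[predC S]| = T - #|S|.
    by have := cardC S; rewrite card_ord; lia.
  rewrite -[#|[pred i | i \notin S]|]/#|[predC S]| hC.
  apply: exp_mono => //; first exact: max_card.
  by have := max_card (mem S); rewrite card_ord.
apply: (@leq_trans (\sum_(S : {set 'I_T} | s <= #|S|) c)); first exact: leq_sum.
apply: (@leq_trans (\sum_(S : {set 'I_T}) c)).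
  by rewrite [X in X <= _]big_mkcond; apply: leq_sum => S _; case: ifP.
by rewrite sum_nat_const card_sets card_ord.
Qed.

Definition Pf n m (M : {set Bstr n}) (b : Bstr m) : pred {ffun Bstr n -> Bstr m} :=
  fun f => [forall a in M, f a != b].

Lemma card_Pf n m (M : {set Bstr n}) (b : Bstr m) :
  #|Pf M b| = (2 ^ m).-1 ^ #|M| * (2 ^ m) ^ (2 ^ n - #|M|).
Proof.
have -> : #|Pf M b| =
    #|(finfun.family (fun a => if a \in M then predC1 b else predT) : simpl_pred {ffun Bstr n -> Bstr m})|.
  apply: eq_card => f; rewrite [in LHS]unfold_in /=.
  apply/forallP/familyP => h a; have := h a; case: (a \in M) => //=.
rewrite card_family_prod (bigID (mem M)) /=.
rewrite (eq_bigr (fun=> (2 ^ m).-1)); last first.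
  by move=> a ->; rewrite cardC1 card_tuple card_bool.
rewrite [X in _ * X](eq_bigr (fun=> 2 ^ m)); last first.
  by move=> a /negbTE ->; rewrite -card_bool -card_tuple.
rewrite !prod_nat_const.
have hC : #|[predC M]| = 2 ^ n - #|M|.
  by have := cardC M; rewrite card_tuple card_bool; lia.
by rewrite -[#|[pred i | i \notin M]|]/#|[predC M]| hC.
Qed.

Lemma final_ineq n m' (N s T A : nat) : N = 4 * 2 ^ m'.+1 ->
  s = (4 * n + 1) * 2 ^ m' -> T = 2 * s -> A = (2 ^ m'.+1) ^ (2 ^ n) ->
  'C(2 ^ n, N) * (2 ^ m'.+1 * (2 ^ T * (((2 ^ m'.+1).-1 ^ N * (2 ^ m'.+1) ^ (2 ^ n - N)) ^ s * A ^ (T - s))))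
   < A ^ T.
Proof.
move=> eN es eT eA; set m := m'.+1.
have Apos : 0 < A by rewrite eA !expn_gt0.
have [hN|hN] := leqP N (2 ^ n); last by rewrite bin_small // mul0n expn_gt0 Apos.
set q := (2 ^ m).-1 ^ N * (2 ^ m) ^ (2 ^ n - N).
have hq : 16 * q <= A.
  rewrite eA -(subnKC hN) expnD /q mulnA leq_mul2r; apply/orP; right.
  have k := key_ineq (expn_gt0 2 m).
  have := leq_expn 4 k; rewrite expnMn -!expnM.
  by rewrite eN (mulnC 4).
have hC : 'C(2 ^ n, N) <= 2 ^ (n * N) by rewrite expnM; apply: bin_le_exp.
have hE : 2 ^ (n * N) * (2 ^ m * 2 ^ T) < 16 ^ s.
  rewrite -!expnD (_ : 16 = 2 ^ 4) // -expnM ltn_exp2l //.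
  have := ltn_expl m' (isT : 1 < 2).
  rewrite eN eT es /m expnS; set e := 2 ^ m' => h; nia.
have hW : 16 ^ s * q ^ s <= A ^ s by rewrite -expnMn leq_expn.
have hT : A ^ T = A ^ s * A ^ (T - s) by rewrite -expnD eT; congr (_ ^ _); lia.
rewrite hT.
have h1 : 'C(2 ^ n, N) * (2 ^ m * 2 ^ T) < 16 ^ s.
  by apply: leq_ltn_trans hE; rewrite leq_mul2r hC orbT.
have ARpos : 0 < A ^ (T - s) by rewrite expn_gt0 Apos.
move: h1 hW ARpos; set K := 'C(2 ^ n, N); set x := 2 ^ m; set t := 2 ^ T;
  set W := 16 ^ s; set Q := q ^ s; set AS := A ^ s; set AR := A ^ (T - s).
move=> h1 hW ARpos.
have ASpos : 0 < AS by rewrite expn_gt0 Apos.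
have hLQ : K * (x * t) * Q < AS.
  case: (posnP Q) => [->|Qpos]; first by rewrite muln0.
  apply: leq_trans hW; by rewrite ltn_pmul2r.
have -> : K * (x * (t * (Q * AR))) = K * (x * t) * Q * AR by rewrite !mulnA.
by rewrite ltn_pmul2r.
Qed.

Lemma good_exists n m' (N s T : nat) : N = 4 * 2 ^ m'.+1 ->
  s = (4 * n + 1) * 2 ^ m' -> T = 2 * s ->
  exists F : {ffun 'I_T -> {ffun Bstr n -> Bstr m'.+1}},
    forall (M : {set Bstr n}) (b : Bstr m'.+1), #|M| = N ->
      #|[set i | Pf M b (F i)]| < s.
Proof.
move=> eN es eT.
set m := m'.+1.
pose U := {ffun Bstr n -> Bstr m}.
pose Bad := \bigcup_(M : {set Bstr n} | #|M| == N) \bigcup_(b : Bstr m)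
   [set F : {ffun 'I_T -> U} | s <= #|[set i | Pf M b (F i)]|].
suff hlt : #|Bad| < #|{ffun 'I_T -> U}|.
  have /subsetPn [F _ nF] : ~~ ([set: {ffun 'I_T -> U}] \subset Bad).
    apply: contraTN hlt => /subset_leq_card; rewrite cardsT -leqNgt.
    by [].
  exists F => M b hM; rewrite ltnNge; apply: contra nF => hb.
  apply/bigcupP; exists M; first by rewrite hM.
  by apply/bigcupP; exists b => //; rewrite inE.
have hsT : s <= T by rewrite eT; lia.
set A := (2 ^ m) ^ (2 ^ n).
have cU : #|U| = A by rewrite card_ffun !card_tuple card_bool.
set c := 2 ^ T * (((2 ^ m).-1 ^ N * (2 ^ m) ^ (2 ^ n - N)) ^ s * A ^ (T - s)).
apply: leq_ltn_trans (card_bigcup_le _ _) _.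
apply: (@leq_ltn_trans (\sum_(M : {set Bstr n} | #|M| == N) (2 ^ m * c))).
  apply: leq_sum => M /eqP hM.
  apply: leq_trans (card_bigcup_le _ _) _.
  have -> : 2 ^ m * c = \sum_(b : Bstr m) c by rewrite sum_nat_const card_tuple card_bool.
  apply: leq_sum => b _.
  apply: leq_trans (card_bad (Pf M b) hsT) _.
  by rewrite card_Pf hM cU.
have -> : \sum_(M : {set Bstr n} | #|M| == N) (2 ^ m * c) =
    \sum_(M in [set M : {set Bstr n} | #|M| == N]) (2 ^ m * c).
  by apply: eq_bigl => M; rewrite inE.
rewrite sum_nat_const card_draws card_tuple card_bool card_ffun card_ord cU.
exact: final_ineq.
Qed.
Lemma INR_expn a k : INR (a ^ k)%N = (INR a ^ k)%R.
Proof.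
elim: k => [|k IH]; first by [].
rewrite expnS; rewrite -[(a * a ^ k)%N]/(Nat.mul a (a ^ k)) mult_INR IH /=; lra.
Qed.

Theorem mainTheorem5 :
  exists K k D : R, (0 < K)%R /\ (0 < k)%R /\ (0 < D)%R /\
    forall n m : nat, (0 < m)%N -> (m <= n)%N ->
      exists (T : nat) (F : 'I_T -> Bstr n -> Bstr m),
        (INR T <= K * 2 ^ m * Rpower (INR n) k)%R /\
        forall (b : Bstr m) (I : {set 'I_T}),
          (INR T / 2 <= INR #|I|)%R ->
          (INR (missed F I b) <= D * 2 ^ m)%R.
Proof.
exists 5%R, 1%R, 4%R; split; [lra|split;[lra|split;[lra|]]].
move=> n m hm hmn; case: m hm hmn => [//|m'] _ hmn.
pose s := ((4 * n + 1) * 2 ^ m')%N; pose T := (2 * s)%N; pose N := (4 * 2 ^ m'.+1)%N.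
have [F hF] := @good_exists n m' N s T erefl erefl erefl.
have npos : (0 < n)%N by apply: leq_trans hmn.
have I2 : INR 2 = 2%R by [].
exists T, (fun i a => F i a); split.
  have hT : (T <= 5 * 2 ^ m'.+1 * n)%N.
    rewrite /T /s expnS; set e := 2 ^ m'; nia.
  apply: Rle_trans (le_INR _ _ (leP hT)) _.
  rewrite -[(5 * 2 ^ m'.+1 * n)%N]/(Nat.mul (Nat.mul 5 (2 ^ m'.+1)) n) !mult_INR INR_expn I2.
  rewrite Rpower_1; last by apply: lt_0_INR; apply/ltP.
  have -> : INR 5 = 5%R by rewrite /=; lra.
  lra.
move=> b I hI.
have hI' : (T <= 2 * #|I|)%N.
  apply/leP; apply: INR_le.
  rewrite -[(2 * #|I|)%N]/(Nat.mul 2 #|I|) mult_INR I2; lra.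
have hmis : (missed (fun i a => F i a) I b <= N)%N.
  rewrite leqNgt; apply/negP => hlt.
  move: hlt; rewrite /missed; set A := [set a | _] => hlt.
  pose M := [set x in take N (enum A)].
  have hM : #|M| = N.
    rewrite cardsE; move/card_uniqP: (take_uniq N (enum_uniq (mem A))) => ->.
    by rewrite size_takel // -cardE ltnW.
  have sub : I \subset [set i | Pf M b (F i)].
    apply/subsetP => i hi; rewrite inE /Pf; apply/forallP => a; apply/implyP.
    rewrite inE => ha; have : a \in A by rewrite -mem_enum; apply: mem_take ha.
    by rewrite inE => /forallP /(_ i) /implyP; apply.
  have := hF M b hM; have := subset_leq_card sub; rewrite /T in hI'; move=> h1 h2; have h3 := leq_ltn_trans h1 h2; by move: hI'; rewrite leq_mul2l /= leqNgt h3.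
apply: Rle_trans (le_INR _ _ (leP hmis)) _.
rewrite -[N]/(Nat.mul 4 (2 ^ m'.+1)) mult_INR INR_expn I2.
have -> : INR 4 = 4%R by rewrite /=; lra.
lra.
Qed.
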